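(* Let $X$ be a real Hilbert space, $r>0$, and let $Z\subset X$ be an $r$-prox-regular set. Assume there exist $R\ge 3$ and $\rho\in\left(0,\frac{2r}{1+R^2}\right)$ such that for every $x\in Z$ there exists $\bar x\in Z$ with $|x-\bar x|<R\rho$ and $B_{3\rho}(\bar x)\subset Z$. Then for every $x\in\partial Z$ there exists a unit vector $\xi\in X$ such that $$\langle \xi, x-z\rangle+\frac{1}{2r}|x-z|^2\ge 0\quad\text{for all } z\in Z.$$
   Context: $X$ is a real Hilbert space with scalar product $\langle\cdot,\cdot\rangle$ and norm $|\cdot|$; $\mathrm{dist}(x,Z)=\inf\{|x-z|:z\in Z\}$; $B_\delta(x)=\{y\in X:|y-x|\le\delta\}$ is the closed ball; $\partial Z$ is the boundary of $Z$. A closed connected set $Z\subset X$ is called $r$-prox-regular ($r>0$) if for every $y\in X$ with $\mathrm{dist}(y,Z)=d\in(0,r)$ there exists $x\in Z$ such that $\mathrm{dist}\left(x+\frac{r}{d}(y-x),Z\right)=\frac{r}{d}|y-x|=r$. *)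

(* Defs.v *)
From HB Require Import structures.
From mathcomp Require Import all_boot all_order all_algebra.
From mathcomp Require Import all_classical all_reals all_analysis.
Set Implicit Arguments. Unset Strict Implicit. Unset Printing Implicit Defensive.
Import Order.TTheory GRing.Theory Num.Theory.
Import numFieldNormedType.Exports.
Local Open Scope classical_set_scope.
Local Open Scope ring_scope.

Definition hilbert_ip (R : realType) (V : completeNormedModType R)
  (ip : V -> V -> R) : Prop :=
  [/\ forall x y : V, ip x y = ip y x,
      forall (a : R) (x y z : V), ip (a *: x + y) z = a * ip x z + ip y z
    & forall x : V, ip x x = `|x| ^+ 2].

Definition dist (R : realType) (V : normedModType R) (x : V) (Z : set V) : R :=
  inf [set `|x - z| | z in Z].

Definition cball (R : realType) (V : normedModType R) (x : V) (delta : R)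
  : set V := [set y | `|y - x| <= delta].

Definition bdry (R : realType) (V : normedModType R) (Z : set V) : set V :=
  closure Z `\` interior Z.

Definition prox_regular (R : realType) (V : normedModType R) (r : R)
  (Z : set V) : Prop :=
  [/\ closed Z, connected Z &
   forall y : V, 0 < dist y Z -> dist y Z < r ->
     exists2 x, Z x &
       dist (x + (r / dist y Z) *: (y - x)) Z = (r / dist y Z) * `|y - x| /\
       (r / dist y Z) * `|y - x| = r].

(* Main.v *)
Require Import Defs.
From HB Require Import structures.
From mathcomp Require Import all_boot all_order all_algebra.
From mathcomp Require Import all_classical all_reals all_analysis.
From mathcomp Require Import ring lra.
Import Order.TTheory GRing.Theory Num.Theory.
Import numFieldNormedType.Exports.
Local Open Scope classical_set_scope.
Local Open Scope ring_scope.



Lemma ip0l {R : realType} {V : completeNormedModType R} {ip : V -> V -> R} :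
  hilbert_ip ip -> forall z, ip 0 z = 0.
Proof.
case=> _ hl _ z; have := hl 1 0 0 z; rewrite scale1r addr0 mul1r => e; lra.
Qed.
Lemma ipDl {R : realType} {V : completeNormedModType R} {ip : V -> V -> R} :
  hilbert_ip ip -> forall x y z, ip (x + y) z = ip x z + ip y z.
Proof. by case=> _ hl _ x y z; have := hl 1 x y z; rewrite scale1r mul1r. Qed.
Lemma ipZl {R : realType} {V : completeNormedModType R} {ip : V -> V -> R} :
  hilbert_ip ip -> forall a x z, ip (a *: x) z = a * ip x z.
Proof.
move=> h a x z; case: (h) => _ hl _; by rewrite -[a *: x]addr0 hl (ip0l h) addr0.
Qed.
Lemma ipNl {R : realType} {V : completeNormedModType R} {ip : V -> V -> R} :
  hilbert_ip ip -> forall x z, ip (- x) z = - ip x z.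
Proof. by move=> h x z; rewrite -scaleN1r (ipZl h) mulN1r. Qed.
Lemma ipBl {R : realType} {V : completeNormedModType R} {ip : V -> V -> R} :
  hilbert_ip ip -> forall x y z, ip (x - y) z = ip x z - ip y z.
Proof. by move=> h x y z; rewrite (ipDl h) (ipNl h). Qed.
Lemma ipDr {R : realType} {V : completeNormedModType R} {ip : V -> V -> R} :
  hilbert_ip ip -> forall x y z, ip z (x + y) = ip z x + ip z y.
Proof. by move=> h x y z; case: (h) => hs _ _; rewrite !(hs z) (ipDl h). Qed.
Lemma ipZr {R : realType} {V : completeNormedModType R} {ip : V -> V -> R} :
  hilbert_ip ip -> forall a x z, ip z (a *: x) = a * ip z x.
Proof. by move=> h a x z; case: (h) => hs _ _; rewrite !(hs z) (ipZl h). Qed.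
Lemma ipNr {R : realType} {V : completeNormedModType R} {ip : V -> V -> R} :
  hilbert_ip ip -> forall x z, ip z (- x) = - ip z x.
Proof. by move=> h x z; case: (h) => hs _ _; rewrite !(hs z) (ipNl h). Qed.
Lemma ipBr {R : realType} {V : completeNormedModType R} {ip : V -> V -> R} :
  hilbert_ip ip -> forall x y z, ip z (x - y) = ip z x - ip z y.
Proof. by move=> h x y z; rewrite (ipDr h) (ipNr h). Qed.
Lemma normD2 {R : realType} {V : completeNormedModType R} {ip : V -> V -> R} :
  hilbert_ip ip -> forall x y, `|x + y| ^+ 2 = `|x| ^+ 2 + 2 * ip x y + `|y| ^+ 2.
Proof.
move=> h x y; case: (h) => hs _ hn.
rewrite -(hn (x+y)) -(hn x) -(hn y) (ipDl h) !(ipDr h) (hs y x); lra.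
Qed.
Lemma normB2 {R : realType} {V : completeNormedModType R} {ip : V -> V -> R} :
  hilbert_ip ip -> forall x y, `|x - y| ^+ 2 = `|x| ^+ 2 - 2 * ip x y + `|y| ^+ 2.
Proof.
by move=> h x y; rewrite (normD2 h) normrN (ipNr h); lra.
Qed.
Lemma ipCS {R : realType} {V : completeNormedModType R} {ip : V -> V -> R} :
  hilbert_ip ip -> forall x y, ip x y <= `|x| * `|y|.
Proof.
move=> h x y.
have e : 4 * ip x y = `|x + y| ^+ 2 - `|x - y| ^+ 2.
  by rewrite (normD2 h) (normB2 h); lra.
have h1 : `|x + y| <= `|x| + `|y| := ler_normD _ _.
have h2 := ler_dist_dist x y.
move: h2; rewrite ler_norml => /andP[h2 h3].
have := normr_ge0 (x + y); have := normr_ge0 (x - y).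
have := normr_ge0 x; have := normr_ge0 y.
move: e h1 h2 h3.
set a := `|x + y|; set b := `|x - y|; set u := `|x|; set v := `|y|; set w := ip x y.
nra.
Qed.
Lemma ipCS' {R : realType} {V : completeNormedModType R} {ip : V -> V -> R} :
  hilbert_ip ip -> forall x y, - (`|x| * `|y|) <= ip x y.
Proof.
by move=> h x y; rewrite lerNl -(ipNl h) -(normrN x) (ipCS h).
Qed.



Lemma dist_le {R : realType} {V : normedModType R} (Z : set V) y z :
  Z z -> dist y Z <= `|y - z|.
Proof.
move=> Zz; apply: ge_inf; last by exists z.
by exists 0 => _ [w _ <-].
Qed.

Lemma dist_ge {R : realType} {V : normedModType R} (Z : set V) y t :
  (exists z, Z z) -> (forall z, Z z -> t <= `|y - z|) -> t <= dist y Z.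
Proof.
move=> [z0 Zz0] H; apply: lb_le_inf; first by exists `|y - z0|, z0.
by move=> _ [w Zw <-]; exact: H.
Qed.

Lemma normal_of {R : realType} {V : completeNormedModType R} {ip : V -> V -> R}
  (r : R) (Z : set V) y :
  hilbert_ip ip -> 0 < r -> prox_regular r Z -> 0 < dist y Z -> dist y Z < r ->
  exists p, [/\ Z p, `|y - p| = dist y Z &
    forall z, Z z -> 0 <= ip ((dist y Z)^-1 *: (y - p)) (p - z) + (2 * r)^-1 * `|p - z| ^+ 2].
Proof.
move=> h r0 [_ _ PR] d0 dr.
have [p Zp [H1 H2]] := PR y d0 dr.
set d := dist y Z in d0 dr H1 H2 *.
have Hyp : `|y - p| = d.
  have : r / d * `|y - p| = r / d * d by rewrite H2 mulfVK ?gt_eqF.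
  by move/mulfI; apply; rewrite mulf_neq0 ?invr_eq0 ?gt_eqF.
exists p; split => // z Zz.
set xi := d^-1 *: (y - p).
have nxi : `|xi| = 1 by rewrite normrZ Hyp ger0_norm ?invr_ge0 ?ltW // mulVf ?gt_eqF.
have := dist_le Z (p + r / d *: (y - p)) z Zz.
rewrite H1 H2.
have -> : p + r / d *: (y - p) - z = r *: xi + (p - z).
  by rewrite /xi scalerA addrAC addrC.
move=> hr.
have hr2 : r ^+ 2 <= `|r *: xi + (p - z)| ^+ 2.
  by move: hr; set a := `|_|; nra.
move: hr2; rewrite (normD2 h) normrZ nxi mulr1 (ipZl h) (ger0_norm (ltW r0)).
move=> hh.
have : 0 <= (2 * r) * (ip xi (p - z) + (2 * r)^-1 * `|p - z| ^+ 2).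
  rewrite mulrDr mulrA mulfV ?mul1r; last by rewrite mulf_neq0 ?gt_eqF.
  lra.
by rewrite pmulr_rge0 // mulr_gt0.
Qed.



Lemma upgrade {R : realType} {V : completeNormedModType R} {ip : V -> V -> R}
  (r : R) (Z : set V) (x zeta : V) (K : R) :
  hilbert_ip ip -> 0 < r -> prox_regular r Z -> Z x -> zeta != 0 -> 0 < K ->
  (forall z, Z z -> ip zeta (z - x) <= K * `|z - x| ^+ 2) ->
  exists xi : V, `|xi| = 1 /\
      (forall z, Z z -> 0 <= ip xi (x - z) + (2 * r)^-1 * `|x - z| ^+ 2).
Proof.
move=> h r0 PR Zx z0 K0 HK.
set n := `|zeta|.
have n0 : 0 < n by rewrite normr_gt0.
set xi := n^-1 *: zeta.
have nxi : `|xi| = 1 by rewrite normrZ ger0_norm ?invr_ge0 ?ltW // mulVf ?gt_eqF.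
set K' := K / n.
have K'0 : 0 < K' by rewrite divr_gt0.
have HK' : forall z, Z z -> ip xi (x - z) >= - (K' * `|x - z| ^+ 2).
  move=> z Zz; rewrite -opprB (ipNr h) normrN lerN2 /xi (ipZl h) /K'.
  rewrite -mulrA mulrCA ler_pM2l ?invr_gt0 //; exact: HK.
set t := r / (2 + 4 * K' * r).
have den0 : 0 < 2 + 4 * K' * r.
  have : 0 < K' * r by rewrite mulr_gt0.
  lra.
have t0 : 0 < t by rewrite divr_gt0.
have tr : t < r.
  rewrite /t ltr_pdivrMr // -subr_gt0.
  have := mulr_gt0 (mulr_gt0 K'0 r0) r0.
  nra.
have ht : t * (2 + 4 * K' * r) = r by rewrite /t mulfVK ?gt_eqF.
have tK : 2 * t * K' <= 1 / 2.
  move: ht t0 r0 K'0; set T := t; nra.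
set y := x + t *: xi.
have key : forall z, Z z -> `|y - z| ^+ 2 >= t ^+ 2 + `|x - z| ^+ 2 / 2.
  move=> z Zz.
  have -> : y - z = t *: xi + (x - z) by rewrite /y addrAC addrC.
  rewrite (normD2 h (t *: xi)) normrZ nxi mulr1 (ger0_norm (ltW t0)) (ipZl h).
  have := HK' z Zz; have := normr_ge0 (x - z).
  move: tK t0 K'0; set a := `|x - z|; set b := ip xi (x - z).
  nra.
have dy : dist y Z = t.
  apply/eqP; rewrite eq_le; apply/andP; split.
    have := dist_le Z y x Zx.
    by rewrite /y addrAC subrr add0r normrZ nxi mulr1 (ger0_norm (ltW t0)).
  apply: dist_ge; first by exists x.
  move=> z Zz; have := key z Zz; have := normr_ge0 (y - z); have := normr_ge0 (x - z).
  set a := `|y - z|; set b := `|x - z|; move=> *; nra.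
have d0 : 0 < dist y Z by rewrite dy.
have dr : dist y Z < r by rewrite dy.
have [p [Zp Hyp Hn]] := normal_of r Z y h r0 PR d0 dr.
have px : p = x.
  have := key p Zp; rewrite Hyp dy.
  have := normr_ge0 (x - p); set a := `|x - p| => a0 ha.
  have a00 : a = 0 by nra.
  by move/eqP: a00; rewrite /a normr_eq0 subr_eq0 => /eqP.
subst p.
exists ((dist y Z)^-1 *: (y - x)); split => //.
by rewrite normrZ Hyp ger0_norm ?invr_ge0 ?dy ?ltW // mulVf ?gt_eqF.
Qed.



Lemma pr_approx {R : realType} {V : completeNormedModType R} {ip : V -> V -> R}
  (r : R) (Z : set V) (x : V) (e : R) :
  hilbert_ip ip -> 0 < r -> prox_regular r Z -> Z x -> ~ interior Z x -> 0 < e ->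
  exists p xi, [/\ Z p, `|xi| = 1, `|p - x| < e &
    forall z, Z z -> 0 <= ip xi (p - z) + (2 * r)^-1 * `|p - z| ^+ 2].
Proof.
move=> h r0 PR Zx nint e0.
set del := Num.min (e / 2) r.
have del0 : 0 < del by rewrite lt_min r0 andbT divr_gt0.
have [y yx nZy] : exists2 y, `|x - y| < del & ~ Z y.
  apply: contrapT => nex; apply: nint; rewrite /interior /=.
  apply/nbhs_ballP; exists del => //= y; rewrite -ball_normE /=.
  move=> hy; apply: contrapT => nZ; apply: nex; by exists y.
move: yx; rewrite lt_min => /andP[yx1 yx2].
have [eps eps0 Heps] : exists2 eps, 0 < eps & forall z, Z z -> eps <= `|y - z|.
  have : open (~` Z) by apply: closed_openC; case: PR.
  rewrite openE => /(_ y nZy) /nbhs_ballP [eps eps0 Hb].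
  exists eps => // z Zz; rewrite leNgt; apply/negP => hz.
  by apply: (Hb z) => //; rewrite -ball_normE /=.
have d0 : 0 < dist y Z.
  by apply: (lt_le_trans eps0); apply: dist_ge => //; exists x.
have dle : dist y Z <= `|y - x| := dist_le Z y x Zx.
have dr : dist y Z < r.
  by apply: (le_lt_trans dle); rewrite -normrN opprB.
have [p [Zp Hyp Hn]] := normal_of r Z y h r0 PR d0 dr.
exists p, ((dist y Z)^-1 *: (y - p)); split => //.
  by rewrite normrZ Hyp ger0_norm ?invr_ge0 ?ltW // mulVf ?gt_eqF.
have : `|p - x| <= `|p - y| + `|y - x|.
  by have := ler_normD (p - y) (y - x); rewrite addrA subrK.
rewrite -(normrN (p - y)) opprB Hyp -(normrN (y - x)) opprB.
move: dle; rewrite -(normrN (y - x)) opprB; lra.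
Qed.



Lemma cbound {R : realType} {V : completeNormedModType R} {ip : V -> V -> R}
  (r : R) (Z : set V) (xb p xi : V) (Rc rho : R) :
  hilbert_ip ip -> 0 < r -> 3 <= Rc -> 0 < rho -> rho * (1 + Rc ^+ 2) < 2 * r ->
  cball xb (3 * rho) `<=` Z -> `|xi| = 1 ->
  (forall z, Z z -> 0 <= ip xi (p - z) + (2 * r)^-1 * `|p - z| ^+ 2) ->
  `|p - xb| < Rc * rho ->
  6 * r * rho - rho ^+ 2 * (Rc ^+ 2 + 9) <= 2 * r * ip xi (p - xb).
Proof.
move=> h r0 R3 rho0 hrho hball nxi Hn hD.
set z := xb + (3 * rho) *: xi.
have Zz : Z z.
  apply: hball; rewrite /cball /= /z addrAC subrr add0r normrZ nxi mulr1.
  by rewrite ger0_norm // mulr_ge0 // ltW.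
have := Hn z Zz.
have -> : p - z = (p - xb) - (3 * rho) *: xi by rewrite /z opprD addrA.
rewrite (normB2 h) (ipBr h) !(ipZr h) normrZ nxi mulr1 (ger0_norm (_ : 0 <= 3 * rho)); last first.
  by rewrite mulr_ge0 // ltW.
have -> : ip xi xi = 1 by case: h => _ _ ->; rewrite nxi expr1n.
case: (h) => hs _ _; rewrite (hs (p - xb)).
set a := ip xi (p - xb); set D := `|p - xb|.
have D0 : 0 <= D := normr_ge0 _.
move: hD; rewrite -/D => hD.
move=> H.
have H2 : 0 <= 2 * r * (a - 3 * rho * 1) + (D ^+ 2 - 2 * (3 * rho * a) + (3 * rho) ^+ 2).
  have r20 : 0 < 2 * r by rewrite mulr_gt0.
  have e2 : 2 * r * (2 * r)^-1 = 1 by rewrite mulfV // gt_eqF.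
  by have := mulr_ge0 (ltW r20) H; rewrite mulrDr [2 * r * ((2 * r)^-1 * _)]mulrA e2 mul1r.
have hD2 : D ^+ 2 <= (Rc * rho) ^+ 2.
  nra.
have R9 : 9 <= Rc ^+ 2 by nra.
have r6 : 10 * rho < 2 * r by nra.
have g0 : 0 < 6 * r * rho - rho ^+ 2 * (Rc ^+ 2 + 9) by nra.
case: (leP 0 a) => ha; nra.
Qed.



Lemma inv_nat_anti {R : realType} (n k : nat) :
  (n <= k)%N -> (k.+1%:R)^-1 <= (n.+1%:R)^-1 :> R.
Proof. by move=> nk; rewrite lef_pV2 ?posrE ?ltr0Sn // ler_nat ltnS. Qed.

Lemma archi {R : realType} (e : R) : 0 < e -> exists N : nat, (N.+1%:R)^-1 < e.
Proof.
move=> e0; exists (Num.truncn e^-1).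
by rewrite invf_plt ?posrE ?ltr0Sn // archimedean.Num.Theory.truncnS_gt.
Qed.

Lemma inv_nat_gt0 {R : realType} (n : nat) : 0 < (n.+1%:R)^-1 :> R.
Proof. by rewrite invr_gt0 ltr0Sn. Qed.

Theorem lemma1p5 (R : realType) (V : completeNormedModType R)
  (ip : V -> V -> R) (r : R) (Z : set V) (Rc rho : R) :
  hilbert_ip ip -> 0 < r -> prox_regular r Z ->
  3 <= Rc -> 0 < rho -> rho < 2 * r / (1 + Rc ^+ 2) ->
  (forall x, Z x -> exists2 xb, Z xb &
      `|x - xb| < Rc * rho /\ cball xb (3 * rho) `<=` Z) ->
  forall x, bdry Z x ->
    exists xi : V, `|xi| = 1 /\
      (forall z, Z z -> 0 <= ip xi (x - z) + (2 * r)^-1 * `|x - z| ^+ 2).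
Proof.
move=> h r0 PR R3 rho0 hrho Hball x bx.
have Zx : Z x.
  case: bx => cx _; case: PR => cl _ _.
  by have ZE := proj1 (closure_id Z) cl; rewrite ZE.
have nint : ~ interior Z x by case: bx.
have [xb Zxb [hxb hballb]] := Hball x Zx.
have hrho' : rho * (1 + Rc ^+ 2) < 2 * r.
  by move: hrho; rewrite ltr_pdivlMr // ltr_wpDr // sqr_ge0.
set v := x - xb.
set g := 6 * r * rho - rho ^+ 2 * (Rc ^+ 2 + 9).
have R9 : 9 <= Rc ^+ 2 by nra.
have g0 : 0 < g by rewrite /g; nra.
have r4 : 0 < 4 * r by rewrite mulr_gt0.
set c := g / (4 * r).
have c0 : 0 < c by rewrite divr_gt0.
set eta0 := Num.min ((Rc * rho - `|x - xb|) / 2) c.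
have eta00 : 0 < eta0.
  by rewrite lt_min c0 andbT divr_gt0 // subr_gt0.
have Hc : forall p xi, Z p -> `|xi| = 1 -> `|p - x| < eta0 ->
    (forall z, Z z -> 0 <= ip xi (p - z) + (2 * r)^-1 * `|p - z| ^+ 2) ->
    c <= ip xi v.
  move=> p xi Zp nxi hpx Hn.
  move: hpx; rewrite lt_min => /andP[hp1 hp2].
  have hpb : `|p - xb| < Rc * rho.
    have := ler_normD (p - x) (x - xb); rewrite addrA subrK.
    move: hp1; lra.
  have hcb := cbound r Z xb p xi Rc rho h r0 R3 rho0 hrho' hballb nxi Hn hpb.
  rewrite -/g in hcb.
  have hcs := ipCS' h xi (x - p).
  rewrite nxi mul1r -(normrN (x - p)) opprB in hcs.
  have -> : v = (x - p) + (p - xb) by rewrite /v addrA subrK.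
  rewrite (ipDr h (x - p)).
  move: hp2; rewrite /c ltr_pdivlMr // => hp2; rewrite ler_pdivrMr //.
  move: hcb hcs hp2; set s := `|p - x|; set a1 := ip xi (x - p); set a2 := ip xi (p - xb).
  nra.
pose A := fun n : nat => [set zeta : V | `|zeta| <= 1 /\ c <= ip zeta v /\
   (forall z, Z z -> ip zeta (z - x) <= r^-1 * `|z - x| ^+ 2 + (n.+1%:R)^-1)].
have ri0 : 0 < r^-1 by rewrite invr_gt0.
have HAn : forall n, exists zeta, A n zeta.
  move=> n.
  set q : R := (n.+1%:R)^-1.
  have q0 : 0 < q := inv_nat_gt0 n.
  set e := Num.min eta0 (Num.min 1 (q / (r^-1 + 1))).
  have e0 : 0 < e.
    have h3 : 0 < q / (r^-1 + 1) by rewrite divr_gt0 // addr_gt0.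
    by rewrite /e lt_min eta00 /= lt_min ltr01 h3.
  have [p [xi [Zp nxi hpx Hn]]] := pr_approx r Z x e h r0 PR Zx nint e0.
  exists xi; split; first by rewrite nxi.
  move: hpx; rewrite lt_min => /andP[hp1]; rewrite lt_min => /andP[hp2 hp3].
  split; first exact: (Hc p xi).
  move=> z Zz.
  have ezx : `|z - x| = `|x - z| by rewrite -normrN opprB.
  rewrite ezx.
  have -> : z - x = (z - p) + (p - x) by rewrite addrA subrK.
  rewrite (ipDr h (z - p)).
  have hn := Hn z Zz.
  have e1 : ip xi (z - p) = - ip xi (p - z) by rewrite -(ipNr h) opprB.
  have hcs := ipCS h xi (p - x); rewrite nxi mul1r in hcs.
  have ht : `|p - z| <= `|p - x| + `|x - z|.
    by have := ler_normD (p - x) (x - z); rewrite addrA subrK.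
  rewrite e1.
  move: hp3; rewrite ltr_pdivlMr ?addr_gt0 // => hp3.
  have i2 : (2 * r)^-1 = 2^-1 * r^-1 by rewrite invfM.
  rewrite i2 in hn.
  have rr : r * r^-1 = 1 by rewrite mulfV ?gt_eqF.
  have := normr_ge0 (p - x); have := normr_ge0 (x - z); have := normr_ge0 (p - z).
  move: hn hcs ht hp2 hp3.
  set s := `|p - x|; set w := `|x - z|; set pz := `|p - z|; set ri := r^-1.
  set b1 := ip xi (p - z); set b2 := ip xi (p - x).
  move=> hn' hcs' ht' hp2' hp3' pz0 w0 s0.
  have p0 : pz * pz <= (s + w) * (s + w) by apply: ler_pM.
  have p1 : pz ^+ 2 <= 2 * s ^+ 2 + 2 * w ^+ 2.
    have e' : 2 * s ^+ 2 + 2 * w ^+ 2 = (s + w) * (s + w) + (s - w) ^+ 2 by ring.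
    rewrite e' expr2; apply: (le_trans p0); rewrite lerDl; exact: sqr_ge0.
  have p2 : ri * s ^+ 2 <= ri * s.
    by rewrite expr2 mulrA; apply: ler_piMr; [exact: mulr_ge0 (ltW ri0) s0 | exact: ltW].
  have p3 : 2^-1 * ri * pz ^+ 2 <= ri * s ^+ 2 + ri * w ^+ 2.
    have hh : 0 <= 2^-1 * ri by rewrite mulr_ge0 // ?invr_ge0 ?ltW.
    have := ler_wpM2l hh p1; lra.
  rewrite -/q; lra.
have Asub : forall n k, (n <= k)%N -> A k `<=` A n.
  move=> n k nk zeta [h1 [h2 h3]]; split => //; split => // z Zz.
  apply: (le_trans (h3 z Zz)); rewrite lerD2l; exact: inv_nat_anti.
have Aconv : forall n a b, A n a -> A n b -> A n (2^-1 *: (a + b)).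
  move=> n a b [a1 [a2 a3]] [b1 [b2 b3]]; split.
    rewrite normrZ ger0_norm ?invr_ge0 ?ler0n //.
    have := ler_normD a b; lra.
  rewrite (ipZl h) (ipDl h); split; first lra.
  move=> z Zz; rewrite (ipZl h) (ipDl h).
  have := a3 z Zz; have := b3 z Zz; move: (n.+1%:R^-1 : R) (r^-1 * `|z - x| ^+ 2) => q K; lra.
pose m := fun n => inf [set `|zeta| ^+ 2 | zeta in A n].
have hlb : forall n, has_lbound [set `|zeta| ^+ 2 | zeta in A n].
  by move=> n; exists 0 => _ [zeta _ <-]; exact: sqr_ge0.
have hne : forall n, [set `|zeta| ^+ 2 | zeta in A n] !=set0.
  by move=> n; have [zeta Az] := HAn n; exists (`|zeta| ^+ 2), zeta.
have hm_lb : forall n zeta, A n zeta -> m n <= `|zeta| ^+ 2.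
  by move=> n zeta Az; apply: ge_inf => //; exists zeta.
have hm_le1 : forall n, m n <= 1.
  move=> n; have [zeta Az] := HAn n; apply: (le_trans (hm_lb n zeta Az)).
  case: Az => hz _; move: hz (normr_ge0 zeta); set u := `|zeta| => hz hu; rewrite expr2; exact: mulr_ile1.
have hm_mono : forall n k, (n <= k)%N -> m n <= m k.
  move=> n k nk; apply: lb_le_inf => //.
  by move=> _ [zeta Az <-]; apply: hm_lb; exact: (Asub n k nk).
have hm_ap : forall n, exists zeta, A n zeta /\ `|zeta| ^+ 2 < m n + (n.+1%:R)^-1.
  move=> n; have [_ [zeta Az <-] hz] := inf_adherent (inv_nat_gt0 n) (conj (hne n) (hlb n)).
  by exists zeta.
have [zs hzs] := choice hm_ap.
pose M := sup (range m).
have hsup : has_sup (range m).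
  by split; [exists (m 0%N), 0%N | exists 1 => _ [n _ <-]].
have hM : forall n, m n <= M.
  by move=> n; apply: ub_le_sup; [case: hsup | exists n].
have hMa : forall e, 0 < e -> exists N, M - e < m N.
  by move=> e e0; have [_ [N _ <-] hN] := sup_adherent e0 hsup; exists N.
have hcau : forall n k, (n <= k)%N ->
    `|zs n - zs k| ^+ 2 <= 2 * (M - m n) + 4 * (n.+1%:R)^-1.
  move=> n k nk.
  have [An hn] := hzs n; have [Ak hk] := hzs k.
  have Akn := Asub n k nk _ Ak.
  have Amid := Aconv n _ _ An Akn.
  have hmid := hm_lb n _ Amid.
  rewrite normrZ exprMn ger0_norm ?invr_ge0 ?ler0n // in hmid.
  have par := normD2 h (zs n) (zs k); have par2 := normB2 h (zs n) (zs k).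
  have hq := @inv_nat_anti R n k nk.
  have hmk := hM k.
  have i4 : (2^-1 : R) ^+ 2 = 4^-1 by rewrite expr2 -invfM -natrM.
  rewrite i4 in hmid.
  move: hmid par par2 hq hmk hn hk.
  move: (n.+1%:R^-1 : R) (k.+1%:R^-1 : R) (m n) (m k) => qn qk mn mk.
  move: (`|zs n + zs k| ^+ 2) (`|zs n - zs k| ^+ 2) (`|zs n| ^+ 2) (`|zs k| ^+ 2) => P Q a b.
  lra.
have hcv : cvg (zs @ \oo).
  apply/cauchy_cvgP; apply: cauchy_exP => eps eps0.
  set e2 := eps ^+ 2 / 8.
  have e20 : 0 < e2 by rewrite divr_gt0 // exprn_gt0.
  have [N1 hN1] := hMa e2 e20.
  have [N2 hN2] := archi e2 e20.
  exists (zs (maxn N1 N2)); exists (maxn N1 N2) => // n /= hn.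
  rewrite -ball_normE /=.
  have h1 := hcau _ _ hn.
  have h2 := hm_mono _ _ (leq_maxl N1 N2).
  have h3 := @inv_nat_anti R _ _ (leq_maxr N1 N2).
  have h4 := normr_ge0 (zs (maxn N1 N2) - zs n).
  move: h1 h2 h3 h4 hN1 hN2.
  move: (`|zs (maxn N1 N2) - zs n|) ((maxn N1 N2).+1%:R^-1 : R) (N2.+1%:R^-1 : R) (m (maxn N1 N2)) (m N1) => d q1 q2 m1 m2.
  rewrite /e2 => *; nra.
set zi := lim (zs @ \oo).
have hl : forall eps, 0 < eps -> exists N, forall n, (N <= n)%N -> `|zi - zs n| < eps.
  move=> eps eps0; have := (proj1 (cvgrPdist_lt _ _) hcv) eps eps0.
  by move=> [N _ HN]; exists N => n hn; exact: HN.
have P1 : c <= ip zi v.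
  apply/ler_addgt0Pr => e e0.
  have nv0 : 0 < `|v| + 1 by rewrite ltr_wpDl.
  have [N HN] := hl (e / (`|v| + 1)) (divr_gt0 e0 nv0).
  have := HN N (leqnn N); rewrite ltr_pdivlMr // => hd.
  have [[_ [hc _]] _] := hzs N.
  have e3 : ip (zs N) v = ip zi v - ip (zi - zs N) v by rewrite (ipBl h); ring.
  have := ipCS' h (zi - zs N) v.
  have := normr_ge0 (zi - zs N); have := normr_ge0 v.
  move: hd hc; rewrite e3.
  move: (`|zi - zs N|) (`|v|) (ip zi v) (ip (zi - zs N) v) => a b i j.
  move=> *; nra.
have P2 : forall z, Z z -> ip zi (z - x) <= r^-1 * `|z - x| ^+ 2.
  move=> z Zz; apply/ler_addgt0Pr => e e0.
  set w := z - x.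
  have nv0 : 0 < `|w| + 1 by rewrite ltr_wpDl.
  have e2 : 0 < e / 2 by rewrite divr_gt0.
  have [N1 HN] := hl (e / 2 / (`|w| + 1)) (divr_gt0 e2 nv0).
  have [N2 hN2] := archi (e / 2) e2.
  set n := maxn N1 N2.
  have := HN n (leq_maxl N1 N2); rewrite ltr_pdivlMr // => hd.
  have hq := @inv_nat_anti R _ _ (leq_maxr N1 N2).
  have [[_ [_ hc]] _] := hzs n.
  have := hc z Zz; rewrite -/w.
  have e3 : ip (zs n) w = ip zi w - ip (zi - zs n) w by rewrite (ipBl h); ring.
  rewrite e3.
  have := ipCS h (zi - zs n) w.
  have := normr_ge0 (zi - zs n); have := normr_ge0 w.
  move: hd hq hN2.
  move: (`|zi - zs n|) (`|w|) (ip zi w) (ip (zi - zs n) w) (n.+1%:R^-1 : R) (N2.+1%:R^-1 : R) (r^-1 * `|w| ^+ 2) => a b i j q1 q2 K.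
  move=> *; nra.
have nz : zi != 0.
  apply/eqP => z0; move: P1; rewrite z0 (ip0l h); move: c0; lra.
exact: upgrade r Z x zi r^-1 h r0 PR Zx nz ri0 P2.
Qed.
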